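(* Let $(X,d,\mu)$ be a complete metric measure space with $\mu$ a doubling Borel regular measure, let $\Omega\subset X$ be a bounded domain, let $0<s<1$, and let $F\subset X$ be a measurable set with $F\setminus\Omega\neq\emptyset$. If $\mathcal{A}(F)\ne\emptyset$, then there exists a minimizer of $\mathcal{J}^s_\Omega$.
   Context: $\mu$ is doubling if there is $C_\mu\ge1$ with $0<\mu(B(x,2r))\le C_\mu\mu(B(x,r))<\infty$ for all $x,r$. A domain is a connected open set. Let $K_s(x,y)=\frac{2}{d(x,y)^s[\mu(B(x,d(x,y)))+\mu(B(y,d(x,y)))]}$, $L_s(A,B)=\int_A\int_BK_s(x,y)\,d\mu(y)\,d\mu(x)$, and $\mathcal{J}^s_\Omega(E)=L_s(E\cap\Omega,X\setminus E)+L_s(E\setminus\Omega,\Omega\setminus E)$. Let $\mathcal{A}(F)=\{E\subset X\text{ measurable}:E\setminus\Omega=F\setminus\Omega,\ \mathcal{J}^s_\Omega(E)<\infty\}$. A measurable $E$ is a minimizer of $\mathcal{J}^s_\Omega$ (with respect to $F$) if $\mathcal{J}^s_\Omega(E)<\infty$, $E\setminus\Omega=F\setminus\Omega$, and $\mathcal{J}^s_\Omega(E)\le\mathcal{J}^s_\Omega(E')$ for all measurable $E'$ with $E'\setminus\Omega=F\setminus\Omega$. *)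

(* Defs.v *)
From HB Require Import structures.
From mathcomp Require Import all_boot all_order all_algebra.
From mathcomp Require Import all_classical all_reals all_analysis.
Set Implicit Arguments. Unset Strict Implicit. Unset Printing Implicit Defensive.
Import Order.TTheory GRing.Theory Num.Theory.
Local Open Scope classical_set_scope.
Local Open Scope ring_scope.

Section MMS.
Context {R : realType} {T : Type}.
Variable (dist : T -> T -> R).

Definition is_metric : Prop :=
  [/\ forall x y, 0 <= dist x y,
      forall x y, dist x y = 0 <-> x = y,
      forall x y, dist x y = dist y x &
      forall x y z, dist x z <= dist x y + dist y z].

Definition oball (x : T) (r : R) : set T := [set y | dist x y < r].

Definition dopen (U : set T) : Prop :=
  forall x, U x -> exists2 r : R, 0 < r & oball x r `<=` U.

Definition dcomplete : Prop :=
  forall u : nat -> T,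
    (forall e : R, 0 < e -> exists N, forall m n, (N <= m)%N -> (N <= n)%N ->
        dist (u m) (u n) < e) ->
    exists l : T, forall e : R, 0 < e -> exists N, forall n, (N <= n)%N ->
        dist (u n) l < e.

Definition dbounded (A : set T) : Prop :=
  exists (x : T) (r : R), A `<=` oball x r.

Definition dconnected (A : set T) : Prop :=
  forall U V : set T, dopen U -> dopen V -> U `|` V = A -> U `&` V = set0 ->
    U = set0 \/ V = set0.

Definition domain (A : set T) : Prop := dopen A /\ dconnected A.

Definition borel_set (A : set T) : Prop := <<s [set U | dopen U] >> A.
End MMS.

Section Functional.
Context {R : realType} {d : measure_display} {X : measurableType d}.
Variables (dist : X -> X -> R) (mu : {measure set X -> \bar R}).
Local Open Scope ereal_scope.

Definition doubling : Prop :=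
  exists2 C : R, (1 <= C)%R &
    forall (x : X) (r : R), (0 < r)%R ->
      [/\ 0 < mu (oball dist x (2 * r)),
          mu (oball dist x (2 * r)) <= C%:E * mu (oball dist x r) &
          mu (oball dist x r) < +oo].

Definition borel_regular : Prop :=
  (forall U : set X, dopen dist U -> measurable U) /\
  (forall A : set X, measurable A ->
     exists2 B : set X, borel_set dist B & A `<=` B /\ mu B = mu A).

(* The ball measures are finite for x <> y under doubling; the diagonal
   (where the formula is 2/0) is never met since L_s is only used on
   disjoint pairs of sets. *)
Definition Ks (s : R) (x y : X) : \bar R :=
  ((2 : R) / ((dist x y) `^ s *
     fine (mu (oball dist x (dist x y)) + mu (oball dist y (dist x y)))))%:E.

Definition Ls (s : R) (A B : set X) : \bar R :=
  \int[mu]_(x in A) \int[mu]_(y in B) Ks s x y.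

Definition Js (s : R) (Omega E : set X) : \bar R :=
  Ls s (E `&` Omega) (~` E) + Ls s (E `\` Omega) (Omega `\` E).

Definition admissible (s : R) (Omega F : set X) : set (set X) :=
  [set E | measurable E /\ E `\` Omega = F `\` Omega /\ Js s Omega E < +oo].

Definition is_minimizer (s : R) (Omega F E : set X) : Prop :=
  [/\ measurable E, Js s Omega E < +oo, E `\` Omega = F `\` Omega &
      forall E' : set X, measurable E' -> E' `\` Omega = F `\` Omega ->
        Js s Omega E <= Js s Omega E'].
End Functional.

(* Main.v *)
Require Import Defs.
From HB Require Import structures.
From mathcomp Require Import all_boot all_order all_algebra.
From mathcomp Require Import all_classical all_reals all_analysis.
From mathcomp Require Import ring lra.
From mathcomp Require Import measurable_realfun.
Import Order.TTheory GRing.Theory Num.Theory.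
Local Open Scope classical_set_scope.
Local Open Scope ring_scope.
Set Implicit Arguments. Unset Strict Implicit. Unset Printing Implicit Defensive.
Section Main.
Context {R : realType} {d : measure_display} {X : measurableType d}.
Variables (dist : X -> X -> R) (mu : {measure set X -> \bar R}).
Hypothesis metric : is_metric dist.
Hypothesis dopen_meas : forall U, dopen dist U -> measurable U.
Variable C : R.
Hypothesis C1 : 1 <= C.
Hypothesis dbl : forall (x : X) (r : R), 0 < r ->
      [/\ (0 < mu (oball dist x (2 * r)))%E,
          (mu (oball dist x (2 * r)) <= C%:E * mu (oball dist x r))%E &
          (mu (oball dist x r) < +oo)%E].
Variable x0 : X.

Lemma d_ge0 x y : 0 <= dist x y. Proof. by case: metric. Qed.
Lemma d_xx x : dist x x = 0. Proof. by case: metric => _ h _ _; apply/h. Qed.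
Lemma d_sym x y : dist x y = dist y x. Proof. by case: metric. Qed.
Lemma d_tri x y z : dist x z <= dist x y + dist y z. Proof. by case: metric. Qed.

Lemma ball_open x r : dopen dist (oball dist x r).
Proof.
move=> y; rewrite /oball /= => hy; exists (r - dist x y); first by rewrite subr_gt0.
move=> z /=; rewrite ltrBrDl => hz.
by apply: le_lt_trans (d_tri x y z) _.
Qed.

Lemma mball x r : measurable (oball dist x r).
Proof. exact/dopen_meas/ball_open. Qed.

Lemma ball_le x r1 r2 : r1 <= r2 -> oball dist x r1 `<=` oball dist x r2.
Proof. by move=> h y /= hy; apply: lt_le_trans h. Qed.

Lemma ball_fin x r : (mu (oball dist x r) < +oo)%E.
Proof.
have [r0|r0] := leP r 0; last by case: (dbl x r0).
rewrite (_ : oball dist x r = set0) ?measure0 ?ltry//.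
apply/seteqP; split=> // y; by rewrite /oball /= ltNge (le_trans r0 (d_ge0 _ _)).
Qed.

Lemma ball_pos x r : 0 < r -> (0 < mu (oball dist x r))%E.
Proof.
move=> r0; have r20 : 0 < r / 2 by rewrite divr_gt0.
by case: (dbl x r20); rewrite mulrC divfK ?pnatr_eq0.
Qed.

Lemma dbl_iter x r n : 0 < r ->
  (mu (oball dist x (2 ^+ n * r)) <= (C ^+ n)%:E * mu (oball dist x r))%E.
Proof.
move=> r0; elim: n => [|n IH]; first by rewrite !expr0 mul1r mul1e.
have h : 0 < 2 ^+ n * r by rewrite mulr_gt0 // exprn_gt0.
case: (dbl x h) => _ h2 _.
rewrite exprS -mulrA (le_trans h2) // exprS EFinM -muleA lee_pmul2l //.
by rewrite lte_fin (lt_le_trans ltr01 C1).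
Qed.

Lemma sigma_finite_mu : sigma_finite setT mu.
Proof.
exists (fun n => oball dist x0 n.+1%:R).
  apply/seteqP; split=> // y _.
  exists (Num.bound (dist x0 y)) => //=.
  by rewrite /oball /= (lt_le_trans (archi_boundP (d_ge0 _ _))) // ler_nat.
move=> n; split; first exact: mball.
exact: ball_fin.
Qed.


Fixpoint Ub (r : R) (s : seq X) : set X :=
  if s is p :: s' then oball dist p r `|` Ub r s' else set0.

Definition sep (r : R) (s : seq X) := pairwise (fun p q => r <= dist p q) s.

Lemma Ub_meas r s : measurable (Ub r s).
Proof. by elim: s => [|p s IH] //=; exact: measurableU (mball _ _) IH. Qed.

Lemma Ub_sub r s R0 : all (fun p => dist x0 p < R0) s ->
  Ub r s `<=` oball dist x0 (R0 + r).
Proof.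
elim: s => [|p s IH] /=; first by move=> _ y.
move=> /andP[hp hs] y [hy|hy]; last exact: IH.
rewrite /oball /= in hy *.
by rewrite (le_lt_trans (d_tri x0 p y)) // ltrD.
Qed.

Lemma Ub_disj r p s : all (fun q => r <= dist p q) s ->
  oball dist p (r/2) `&` Ub (r/2) s = set0.
Proof.
elim: s => [|q s IH] /=; first by rewrite setI0.
move=> /andP[hq hs]; rewrite setIUr IH // setU0.
apply/seteqP; split=> // y [/= h1 h2].
have : dist p q < r.
  rewrite (le_lt_trans (d_tri p y q)) // (d_sym y q) [ltRHS](splitr r) ltrD //.
by rewrite ltNge hq.
Qed.

Lemma Ub_mu r s R0 m :
  (forall p, dist x0 p < R0 -> (m%:E <= mu (oball dist p (r/2)))%E) ->
  sep r s -> all (fun p => dist x0 p < R0) s ->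
  (((size s)%:R * m)%:E <= mu (Ub (r/2) s))%E.
Proof.
move=> hm; elim: s => [|p s IH] /=; first by rewrite mul0r measure0.
rewrite /sep /= => /andP[hp hs] /andP[hx hal].
rewrite measureU; [|exact: mball|exact: Ub_meas|exact: Ub_disj].
rewrite -add1n natrD mulrDl mul1r EFinD; apply: leeD; first exact: hm.
exact: IH.
Qed.

Lemma sep_bound r R0 : 0 < r -> 0 < R0 -> exists N : nat, forall s,
  sep r s -> all (fun p => dist x0 p < R0) s -> (size s <= N)%N.
Proof.
move=> r0 R00.
set M := mu (oball dist x0 (R0 + r)).
have M0 : (0 < M)%E by apply: ball_pos; lra.
have Mf : (M < +oo)%E by apply: ball_fin.
have fM0 : 0 < fine M by rewrite fine_gt0 // M0 Mf.
set n := Num.bound ((2 * R0 + r) / (r/2)).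
have hn : 2 * R0 + r <= 2 ^+ n * (r / 2).
  rewrite -ler_pdivrMr; last by lra.
  apply: (le_trans (ltW (archi_boundP _))); first by apply: divr_ge0; lra.
  rewrite -/n -natrX ler_nat; exact/ltnW/ltn_expl.
have Cn0 : 0 < C ^+ n by rewrite exprn_gt0 // (lt_le_trans ltr01 C1).
have hm : forall p, dist x0 p < R0 ->
    ((fine M / C ^+ n)%:E <= mu (oball dist p (r/2)))%E.
  move=> p hp.
  have h1 : (M <= (C ^+ n)%:E * mu (oball dist p (r/2)))%E.
    apply: le_trans (dbl_iter _ _ _); last by lra.
    apply: le_measure; rewrite ?inE; [exact: mball|exact: mball|].
    move=> y; rewrite /oball /= => hy.
    rewrite (le_lt_trans (d_tri p x0 y)) // (lt_le_trans _ hn) // d_sym.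
    lra.
  have bfin : mu (oball dist p (r/2)) \is a fin_num.
    by rewrite ge0_fin_numE // ball_fin.
  have Mfin : M \is a fin_num by rewrite ge0_fin_numE // ltW.
  move: h1; rewrite -(fineK bfin) -EFinM => h1.
  have h2 : fine M <= C ^+ n * fine (mu (oball dist p (r/2))).
    by rewrite -lee_fin fineK.
  by rewrite lee_fin ler_pdivrMr // mulrC.
exists (Num.bound (C ^+ n)) => s hs hal.
have h := Ub_mu hm hs hal.
have h2 : (mu (Ub (r/2) s) <= M)%E.
  apply: le_measure; rewrite ?inE; [exact: Ub_meas|exact: mball|].
  move=> y /(Ub_sub hal); apply: ball_le; lra.
have h3 := le_trans h h2.
have Mfin : M \is a fin_num by rewrite ge0_fin_numE // ltW.
move: h3; rewrite -(fineK Mfin) lee_fin mulrCA.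
rewrite ger_pMr // ler_pdivrMr // mul1r => h4.
rewrite -ltnS -(ltr_nat R); apply: le_lt_trans h4 _.
by rewrite (lt_le_trans (archi_boundP (ltW Cn0))) // ler_nat.
Qed.


Lemma pos_inv (a : nat) : 0 < (a.+1%:R : R)^-1.
Proof. by rewrite invr_gt0 ltr0Sn. Qed.

Lemma net_ex r R0 : 0 < r -> 0 < R0 -> exists s : seq X,
  forall x, dist x0 x < R0 -> has (fun p => dist x p < r) s.
Proof.
move=> r0 R00; have [N hN] := sep_bound r0 R00.
pose P := fun m => `[< exists s, [/\ sep r s, all (fun p => dist x0 p < R0) s & size s = m] >].
have exP : exists m, P m by exists 0%N; apply/asboolP; exists [::].
have ubP : forall m, P m -> (m <= N)%N.
  by move=> m /asboolP[s [h1 h2 <-]]; exact: hN.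
case: (ex_maxnP exP ubP) => m /asboolP[s [hs hal hsz]] hmax.
exists s => x hx; apply: contraT => hn.
have : P m.+1.
  apply/asboolP; exists (x :: s); split => //=.
  - rewrite /sep /=; apply/andP; split => //.
    move: hn; rewrite -all_predC; apply: sub_all => p /=; rewrite -leNgt.
    by rewrite d_sym.
  - by rewrite hx hal.
  - by rewrite hsz.
by move/hmax; rewrite ltnn.
Qed.

Definition netS (a b : nat) : seq X :=
  projT1 (cid (net_ex (pos_inv a) (ltr0Sn R b))).

Lemma netSP a b x : dist x0 x < b.+1%:R ->
  has (fun p => dist x p < (a.+1%:R)^-1) (netS a b).
Proof. exact: (projT2 (cid (net_ex (pos_inv a) (ltr0Sn R b)))). Qed.

Lemma bound_inv e : 0 < e -> exists j : nat, (j.+1%:R : R)^-1 < e.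
Proof.
move=> e0; exists (Num.bound e^-1).
rewrite -[ltRHS]invrK ltf_pV2 ?posrE ?invr_gt0 ?ltr0Sn //.
rewrite (lt_le_trans (archi_boundP _)) ?ler_nat //.
by rewrite invr_ge0 ltW.
Qed.

Lemma dense x e : 0 < e ->
  exists a b i, dist x (nth x0 (netS a b) i) < e.
Proof.
move=> e0; have [a ha] := bound_inv e0.
set b := Num.bound (dist x0 x).
have hb : dist x0 x < b.+1%:R.
  by rewrite (lt_le_trans (archi_boundP (d_ge0 _ _))) // ler_nat.
have := netSP a hb => /(has_nthP x0)[i _ hi].
by exists a, b, i; apply: lt_trans ha.
Qed.

Definition Dz (z : X * X) := dist z.1 z.2.

Lemma mDz : measurable_fun setT Dz.
Proof.
apply: (measurability _ (RGenInftyO.measurableE R)) => //.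
move=> _ [_ [t ->] <-]; rewrite setTI.
set q := fun a b i => nth x0 (netS a b) i.
rewrite (_ : _ @^-1` _ = \bigcup_a \bigcup_b \bigcup_i \bigcup_j
   (oball dist (q a b i) (j.+1%:R^-1) `*` oball dist (q a b i) (t - j.+1%:R^-1))).
  apply: bigcupT_measurable => a; apply: bigcupT_measurable => b.
  apply: bigcupT_measurable => i; apply: bigcupT_measurable => j.
  by apply: measurableX; exact: mball.
apply/seteqP; split => [[x y]|[x y]].
- rewrite /= /Dz /= in_itv /= => hxy.
  have [j hj] : exists j : nat, 2 * (j.+1%:R : R)^-1 < t - dist x y.
    have h0 : 0 < (t - dist x y) / 2 by rewrite divr_gt0 // subr_gt0.
    have [j hj] := bound_inv h0.
    by exists j; rewrite mulrC -ltr_pdivlMr.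
  have [a [b [i hi]]] := dense x (pos_inv j).
  exists a => //; exists b => //; exists i => //; exists j => //.
  rewrite /oball /=; split; first by rewrite d_sym.
  rewrite (le_lt_trans (d_tri _ x _)) // d_sym.
  move: hi hj; rewrite -/(q a b i); set e := (j.+1%:R)^-1; lra.
- move=> [a _ [b _ [i _ [j _ [/= h1 h2]]]]].
  rewrite /Dz /= in_itv /=.
  rewrite (le_lt_trans (d_tri _ (q a b i) _)) // d_sym.
  move: h1 h2; rewrite /oball /=; set e := (j.+1%:R)^-1; lra.
Qed.


Lemma ball_cont x rho (t : \bar R) : (t < mu (oball dist x rho))%E ->
  exists n : nat, (t < mu (oball dist x (rho - n.+1%:R^-1)))%E.
Proof.
move=> ht; apply: contrapT => hn.
have h : forall n : nat, (mu (oball dist x (rho - n.+1%:R^-1)) <= t)%E.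
  by move=> n; rewrite leNgt; apply/negP => h; apply: hn; exists n.
set F := fun n : nat => oball dist x (rho - n.+1%:R^-1).
have UF : \bigcup_n F n = oball dist x rho.
  apply/seteqP; split => [y [n _]|y hy].
    by apply: ball_le; have := pos_inv n; set e := (n.+1%:R)^-1; lra.
  have h0 : 0 < rho - dist x y by rewrite subr_gt0.
  have [n hn'] := bound_inv h0.
  by exists n => //; rewrite /F /oball /=; move: hy hn'; rewrite /oball /=; set e := (n.+1%:R)^-1; lra.
have cv : (mu \o F) @ \oo --> mu (\bigcup_n F n).
  apply: nondecreasing_cvg_mu.
  - by move=> n; exact: mball.
  - by rewrite UF; exact: mball.
  - apply/nondecreasing_seqP => n; rewrite subsetEset; apply: ball_le.
    rewrite lerD2l lerN2 lef_pV2 ?posrE ?ltr0Sn // ler_nat //.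
rewrite UF in cv.
have : (mu (oball dist x rho) <= t)%E.
  by apply: (cvge_to_le cv); apply: nearW => n; exact: h.
by rewrite leNgt ht.
Qed.

Lemma lsc_open t q : dopen dist [set x | (t < mu (oball dist x q))%E].
Proof.
move=> x /= hx; have [n hn] := ball_cont hx.
exists (n.+1%:R^-1); first exact: pos_inv.
move=> y hy; rewrite /=; apply: (lt_le_trans hn); apply: le_measure.
- by rewrite inE; exact: mball.
- by rewrite inE; exact: mball.
move=> w; rewrite /oball /= => hw; move: hy; rewrite /oball /= => hy.
rewrite (le_lt_trans (d_tri y x w)) // d_sym.
move: hw hy; set e := (n.+1%:R : R)^-1; lra.
Qed.

Definition G1 (z : X * X) := mu (oball dist z.1 (dist z.1 z.2)).
Definition G2 (z : X * X) := mu (oball dist z.2 (dist z.1 z.2)).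

Lemma mG1 : measurable_fun setT G1.
Proof.
apply: (measurability _ (ErealGenOInfty.measurableE R)) => //.
move=> _ [_ [t ->] <-]; rewrite setTI.
rewrite (_ : _ @^-1` _ = \bigcup_(q : rat) ([set z | ratr q < Dz z] `&`
    ([set x | (t%:E < mu (oball dist x (ratr q)))%E] `*` setT))).
  apply: bigcupT_measurable_rat => q; apply: measurableI.
    rewrite (_ : [set z | _] = Dz @^-1` `]ratr q, +oo[); last first.
      by apply/seteqP; split=> z /=; rewrite in_itv /= andbT.
    by rewrite -[X in measurable X]setTI; apply: mDz.
  by apply: measurableX => //; exact/dopen_meas/lsc_open.
apply/seteqP; split => [[x y]|[x y]] /=.
- rewrite in_itv /= andbT => h.
  have [n hn] := ball_cont h.
  have h0 : dist x y - n.+1%:R^-1 < dist x y.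
    by have := pos_inv n; set e := (n.+1%:R : R)^-1; lra.
  have [q hq] := rat_in_itvoo h0.
  move: hq; rewrite in_itv /= => /andP[hq1 hq2].
  exists q => //; split => //=; split => //=.
  apply: (lt_le_trans hn); apply: le_measure; rewrite ?inE; [exact: mball|exact: mball|].
  exact/ball_le/ltW.
- move=> [q _ [/= h1 [/= h2 _]]]; rewrite in_itv /= andbT.
  apply: (lt_le_trans h2); apply: le_measure; rewrite ?inE; [exact: mball|exact: mball|].
  exact/ball_le/ltW.
Qed.

Lemma mG2 : measurable_fun setT G2.
Proof.
rewrite (_ : G2 = G1 \o unstable.swap); last first.
  by apply/funext => -[x y]; rewrite /G1 /G2 /= d_sym.
apply: measurableT_comp; [exact: mG1|exact: measurable_swap].
Qed.


Lemma minv : measurable_fun setT (@GRing.inv R).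
Proof.
have -> : [set: R] = [set x : R | x != 0] `|` [set 0].
  apply/seteqP; split=> // x _; case: (eqVneq x 0) => h; [right|left] => //.
have m1 : measurable [set x : R | x != 0] by apply: open_measurable; exact: open_neq.
apply/(measurable_funU _ m1 (measurable_set1 0)); split.
- apply: open_continuous_measurable_fun; first exact: open_neq.
  by move=> x; rewrite inE => hx; exact: inv_continuous.
- exact: measurable_fun_set1.
Qed.

Variable s : R.

Lemma mK : measurable_fun setT (fun z : X * X => Ks dist mu s z.1 z.2).
Proof.
rewrite /Ks; apply/measurable_EFinP.
apply: measurable_funM => //.
apply: (measurableT_comp minv).
apply: measurable_funM.
- exact: (measurableT_comp (measurable_powR s) mDz).
- apply: (measurableT_comp (fine_measurable measurableT)).
  exact: emeasurable_funD mG1 mG2.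
Qed.

Lemma Ks_ge0 x y : (0 <= Ks dist mu s x y)%E.
Proof.
rewrite /Ks lee_fin divr_ge0 // mulr_ge0 // ?powR_ge0 //.
by apply: fine_ge0; apply: adde_ge0.
Qed.


Definition mus : set X -> \bar R := mu.
HB.instance Definition _ := Measure.on mus.
HB.instance Definition _ := @Measure_isSigmaFinite.Build _ _ _ mus sigma_finite_mu.

Definition kk (z : X * X) := Ks dist mu s z.1 z.2.
Local Notation P := (mus \x mus)%E.

Lemma kk_ge0 z : (0 <= kk z)%E. Proof. exact: Ks_ge0. Qed.

Lemma Ls_prod A B : measurable A -> measurable B ->
  Ls dist mu s A B = (\int[P]_(z in A `*` B) kk z)%E.
Proof.
move=> mA mB.
rewrite integral_mkcond fubini_tonelli1; last 2 first.
- apply: (measurable_restrictT _ (measurableX mA mB)).1.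
  exact: measurable_funS measurableT _ mK.
- by move=> z; apply: erestrict_ge0 => ? _; exact: kk_ge0.
rewrite /Ls [in LHS]integral_mkcond; apply: eq_integral => x _.
rewrite /fubini_F /patch; case: ifPn => hx.
  rewrite [in LHS]integral_mkcond; apply: eq_integral => y _.
  by rewrite /patch in_setX hx /=.
rewrite (_ : (fun y => _) = fun=> 0%E) ?integral0 //.
by apply/funext => y; rewrite in_setX (negbTE hx).
Qed.


Variable Omega : set X.
Hypothesis mO : measurable Omega.

Definition W (E : set X) : set (X * X) :=
  (E `&` Omega) `*` ~` E `|` (E `\` Omega) `*` (Omega `\` E).

Lemma mW E : measurable E -> measurable (W E).
Proof.
move=> mE; apply: measurableU; apply: measurableX.
- exact: measurableI.
- exact: measurableC.
- exact: measurableD.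
- exact: measurableD.
Qed.

Definition Psi (S : set (X * X)) := (\int[P]_(z in S) kk z)%E.
Definition Phi E := Psi (W E).

Lemma mkk S : measurable_fun S kk.
Proof. exact: measurable_funS measurableT _ mK. Qed.

Lemma Psi_ge0 S : (0 <= Psi S)%E.
Proof. by apply: integral_ge0 => z _; exact: kk_ge0. Qed.

Lemma Psi_le S T : measurable S -> measurable T -> S `<=` T -> (Psi S <= Psi T)%E.
Proof.
move=> mS mT ST; apply: ge0_subset_integral => //; first exact: mkk.
by move=> z _; exact: kk_ge0.
Qed.

Lemma Psi_U S T : measurable S -> measurable T -> S `&` T = set0 ->
  Psi (S `|` T) = (Psi S + Psi T)%E.
Proof.
move=> mS mT ST; apply: ge0_integral_setU => //.
- exact: mkk.
- by move=> z _; exact: kk_ge0.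
- by rewrite disj_set2E ST.
Qed.

Lemma Js_Phi E : measurable E -> Js dist mu s Omega E = Phi E.
Proof.
move=> mE; rewrite /Js /Phi /W.
rewrite Ls_prod; [|exact: measurableI|exact: measurableC].
rewrite Ls_prod; [|exact: measurableD|exact: measurableD].
rewrite -/(Psi _) -/(Psi _) Psi_U //.
- by apply: measurableX; [exact: measurableI|exact: measurableC].
- by apply: measurableX; exact: measurableD.
apply/seteqP; split => // -[x y] /= [[[_ hx] _] [[_ hnx] _]]; exact: hnx.
Qed.

Lemma Psi_incl_excl S T : measurable S -> measurable T ->
  (Psi S + Psi T = Psi (S `|` T) + Psi (S `&` T))%E.
Proof.
move=> mS mT.
have -> : S `|` T = S `|` (T `\` S).
  apply/seteqP; split => z /=; case: (pselect (S z)); tauto.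
have eT : T = (T `&` S) `|` (T `\` S).
  apply/seteqP; split => z /=; case: (pselect (S z)); tauto.
have mTS : measurable (T `\` S) by exact: measurableD.
have mTiS : measurable (T `&` S) by exact: measurableI.
have d1 : S `&` (T `\` S) = set0.
  by apply/seteqP; split => // z /=; tauto.
have d2 : (T `&` S) `&` (T `\` S) = set0.
  by apply/seteqP; split => // z /=; tauto.
rewrite [in LHS]eT (Psi_U mS mTS d1) (Psi_U mTiS mTS d2).
by rewrite [T `&` S]setIC addeA addeAC.
Qed.

Lemma submod A B : measurable A -> measurable B ->
  (Phi (A `|` B) + Phi (A `&` B) <= Phi A + Phi B)%E.
Proof.
move=> mA mB; rewrite /Phi.
have mAB : measurable (A `|` B) by exact: measurableU.
have mAIB : measurable (A `&` B) by exact: measurableI.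
rewrite (Psi_incl_excl (mW mAB) (mW mAIB)) (Psi_incl_excl (mW mA) (mW mB)).
apply: leeD; apply: Psi_le.
- by apply: measurableU; exact: mW.
- by apply: measurableU; exact: mW.
- move=> [x y]; rewrite /W /=.
  case: (pselect (A y)); case: (pselect (B y)); case: (pselect (A x));
    case: (pselect (B x)); tauto.
- by apply: measurableI; exact: mW.
- by apply: measurableI; exact: mW.
- move=> [x y]; rewrite /W /=.
  case: (pselect (A y)); case: (pselect (B y)); case: (pselect (A x));
    case: (pselect (B x)); tauto.
Qed.


Lemma Phi_lim (G : nat -> set X) (H : set X) (c : \bar R) :
  (forall n, measurable (G n)) -> measurable H ->
  (forall x, H x -> exists N, forall n, (N <= n)%N -> G n x) ->
  (forall y, ~ H y -> exists N, forall n, (N <= n)%N -> ~ G n y) ->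
  (forall n, (Phi (G n) <= c)%E) -> (Phi H <= c)%E.
Proof.
move=> mG mH hin hout hc.
pose I := fun N => \bigcap_n W (G (N + n)%N).
have mI : forall N, measurable (I N).
  by move=> N; apply: bigcapT_measurable => n; exact: mW.
have ndI : nondecreasing_seq I.
  apply/nondecreasing_seqP => N; rewrite subsetEset => z hz n _.
  by rewrite addSnnS; apply: hz.
have sub : W H `<=` \bigcup_N I N.
  move=> [x y] hz.
  have [hx hy] : H x /\ ~ H y.
    by case: hz => /= [[[? _] ?]|[[? _] [_ ?]]].
  have [N1 h1] := hin x hx; have [N2 h2] := hout y hy.
  exists (maxn N1 N2) => // n _.
  have g1 : G (maxn N1 N2 + n)%N x.
    by apply: h1; apply: leq_trans (leq_maxl N1 N2) (leq_addr _ _).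
  have g2 : ~ G (maxn N1 N2 + n)%N y.
    by apply: h2; apply: leq_trans (leq_maxr N1 N2) (leq_addr _ _).
  by case: hz => /= [[[_ ?] _]|[[_ ?] [? _]]]; [left|right].
have mU : measurable (\bigcup_N I N) by exact: bigcupT_measurable.
apply: (le_trans (Psi_le (mW mH) mU sub)).
have cv : (Psi \o I) @ \oo --> Psi (\bigcup_N I N).
  apply: ge0_nondecreasing_set_cvg_integral => //.
  - by move=> n; exact: mkk.
  - by move=> n z _; exact: kk_ge0.
apply: (cvge_to_le cv); apply: nearW => N; apply: le_trans (hc N).
apply: Psi_le; [exact: mI|exact: mW|].
by move=> z hz; rewrite -[N]addn0; exact: hz.
Qed.

Variable F : set X.
Definition cls E := measurable E /\ E `\` Omega = F `\` Omega.

Lemma clsU A B : cls A -> cls B -> cls (A `|` B).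
Proof.
move=> [mA hA] [mB hB]; split; first exact: measurableU.
by rewrite setDUl hA hB setUid.
Qed.

Lemma clsI A B : cls A -> cls B -> cls (A `&` B).
Proof.
move=> [mA hA] [mB hB]; split; first exact: measurableI.
have -> : (A `&` B) `\` Omega = (A `\` Omega) `&` (B `\` Omega).
  by apply/seteqP; split => x /=; tauto.
by rewrite hA hB setIid.
Qed.

Fixpoint Hs (Es : nat -> set X) (k n : nat) : set X :=
  if n is n'.+1 then Hs Es k n' `&` Es (k + n)%N else Es k.

Definition eps (j : nat) : R := ((2 : R) ^+ j)^-1.

Lemma eps_gt0 j : 0 < eps j.
Proof. by rewrite /eps invr_gt0 exprn_gt0. Qed.

Lemma epsS j : eps j = 2 * eps j.+1.
Proof.
by rewrite /eps exprS invfM mulrA divff ?mul1r.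
Qed.

Lemma eps_le j n : eps (j + n) <= eps j.
Proof.
elim: n => [|n IH]; first by rewrite addn0.
apply: le_trans IH; rewrite (epsS (j + n)) addnS.
by have := eps_gt0 (j + n).+1; lra.
Qed.

Lemma eps_small e : 0 < e -> exists j, 2 * eps j < e.
Proof.
move=> e0; have h0 : 0 < e / 2 by rewrite divr_gt0.
have [j hj] := bound_inv h0; exists j.
have : eps j <= (j.+1%:R)^-1.
  rewrite /eps lef_pV2 ?posrE ?ltr0Sn ?exprn_gt0 //.
  by rewrite -natrX ler_nat; exact: ltn_expl.
move: hj; rewrite ltr_pdivlMr //; set a := (j.+1%:R : R)^-1; lra.
Qed.


Lemma exists_min (E0 : set X) : cls E0 -> (Phi E0 < +oo)%E ->
  exists G, [/\ cls G, (Phi G < +oo)%E & forall E, cls E -> (Phi G <= Phi E)%E].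
Proof.
move=> hE0 hE0f.
pose S := [set Phi E | E in cls].
pose m := ereal_inf S.
have m_lb : forall E, cls E -> (m <= Phi E)%E.
  by move=> E hE; apply: ereal_inf_lbound; exists E.
have m0 : (0 <= m)%E.
  by apply: le_ereal_inf_tmp => _ [E _ <-]; exact: Psi_ge0.
have mfin : m \is a fin_num.
  by rewrite ge0_fin_numE // (le_lt_trans (m_lb _ hE0)).
pose mr := fine m.
have mE : m = mr%:E by rewrite /mr fineK.
have choose : forall j, exists E, cls E /\ (Phi E <= (mr + eps j)%:E)%E.
  move=> j; have : (m < (mr + eps j)%:E)%E.
    by rewrite mE lte_fin ltrDl eps_gt0.
  move/ereal_inf_lt => [_ [E hE <-] hlt]; exists E; split => //; exact: ltW.
have [Es hEs] := choice choose.
have step : forall A B a b, cls A -> cls B ->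
    (Phi A <= (mr + a)%:E)%E -> (Phi B <= (mr + b)%:E)%E ->
    (Phi (A `&` B) <= (mr + (a + b))%:E)%E.
  move=> A B a b hA hB hPA hPB.
  have h := submod hA.1 hB.1.
  have h1 := m_lb _ (clsU hA hB); rewrite mE in h1.
  have h2 : (Phi (A `|` B) + Phi (A `&` B) <= (mr + a + (mr + b))%:E)%E.
    by apply: le_trans h _; rewrite EFinD; exact: leeD.
  have h3 : (mr%:E + Phi (A `&` B) <= (mr + a + (mr + b))%:E)%E.
    by apply: le_trans h2; apply: leeD.
  move: h3 (Psi_ge0 (W (A `&` B))); rewrite /Phi.
  case: (Psi (W (A `&` B))) => [r||] //=.
  - by rewrite -EFinD !lee_fin => ? ?; lra.
have hH : forall k n, cls (Hs Es k n) /\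
    (Phi (Hs Es k n) <= (mr + (2 * eps k - eps (k + n)))%:E)%E.
  move=> k; elim=> [|n [hc hp]] /=.
    split; first exact: (hEs k).1.
    apply: le_trans (hEs k).2 _; rewrite addn0 lee_fin.
    by have := eps_gt0 k; lra.
  split; first exact: clsI hc (hEs _).1.
  apply: le_trans (step _ _ _ _ hc (hEs _).1 hp (hEs _).2) _.
  rewrite lee_fin (epsS (k + n)) addnS; lra.
have Hsub : forall k n0 n, (n0 <= n)%N -> Hs Es k n `<=` Es (k + n0)%N.
  move=> k n0; elim=> [|n IH].
    by rewrite leqn0 => /eqP -> /=; rewrite addn0.
  rewrite leq_eqVlt => /orP[/eqP -> /=|]; first by move=> x [].
  by rewrite ltnS => /IH h x /= [hx _]; exact: h.
pose Gk := fun k => \bigcap_n Es (k + n)%N.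
have GkH : forall k x, Gk k x -> forall n, Hs Es k n x.
  move=> k x hx; elim=> [|n IH] /=.
    by have := hx 0%N I; rewrite addn0.
  by split => //; exact: hx.
have clsGk : forall k, cls (Gk k).
  move=> k; split.
    by apply: bigcapT_measurable => n; exact: (hEs _).1.1.
  apply/seteqP; split => x [hx hO].
    have : (Es k `\` Omega) x by split => //; have := hx 0%N I; rewrite addn0.
    by rewrite (hEs k).1.2.
  split => // n _.
  have : (F `\` Omega) x by [].
  by rewrite -(hEs (k + n)%N).1.2 => -[].
have PGk : forall k, (Phi (Gk k) <= (mr + 2 * eps k)%:E)%E.
  move=> k; apply: (@Phi_lim (Hs Es k)).
  - by move=> n; exact: (hH k n).1.1.
  - exact: (clsGk k).1.
  - by move=> x hx; exists 0%N => n _; exact: GkH.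
  - move=> y hy.
    have [n0 hn0] : exists n0, ~ Es (k + n0)%N y.
      apply: contrapT => hne; apply: hy => n _; apply: contrapT => h.
      by apply: hne; exists n.
    by exists n0 => n hn h; apply: hn0; exact: Hsub hn _ h.
  - move=> n; apply: le_trans (hH k n).2 _; rewrite lee_fin.
    by have := eps_gt0 (k + n); lra.
pose GG := \bigcup_k Gk k.
have Gmono : forall k k', (k <= k')%N -> Gk k `<=` Gk k'.
  move=> k k' hk x hx n _; rewrite -(subnKC hk) -addnA; exact: hx.
have clsGG : cls GG.
  split; first by apply: bigcupT_measurable => k; exact: (clsGk k).1.
  apply/seteqP; split => x [hx hO].
    case: hx => k _ hk.
    have : (Gk k `\` Omega) x by [].
    by rewrite (clsGk k).2.
  have : (Gk 0%N `\` Omega) x by rewrite (clsGk 0%N).2.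
  by move=> [h _]; split => //; exists 0%N.
have PGG : forall j, (Phi GG <= (mr + 2 * eps j)%:E)%E.
  move=> j; apply: (@Phi_lim (fun n => Gk (j + n)%N)).
  - by move=> n; exact: (clsGk _).1.
  - exact: clsGG.1.
  - move=> x [k _ hk]; exists k => n hn.
    by apply: Gmono hk; apply: leq_trans hn (leq_addl j n).
  - by move=> y hy; exists 0%N => n _ h; apply: hy; exists (j + n)%N.
  - move=> n; apply: le_trans (PGk _) _; rewrite lee_fin.
    by have := eps_le j n; lra.
have PGGm : (Phi GG <= m)%E.
  have h0 := PGG 0%N; have g0 := Psi_ge0 (W GG).
  have gfin : Phi GG \is a fin_num.
    by rewrite ge0_fin_numE // (le_lt_trans h0) // ltry.
  rewrite -(fineK gfin) mE lee_fin; apply/ler_addgt0Pr => e e0.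
  have [j hj] := eps_small e0.
  have := PGG j; rewrite -(fineK gfin) lee_fin => h; lra.
exists GG; split => //.
- by rewrite (le_lt_trans PGGm) // mE ltry.
- by move=> E hE; exact: le_trans PGGm (m_lb _ hE).
Qed.

End Main.

Unset Implicit Arguments. Set Strict Implicit.

Theorem theorem5p3 (R : realType) (d : measure_display) (X : measurableType d)
  (dist : X -> X -> R) (mu : {measure set X -> \bar R})
  (Omega F : set X) (s : R) :
  is_metric dist -> dcomplete dist ->
  doubling dist mu -> borel_regular dist mu ->
  domain dist Omega -> dbounded dist Omega ->
  0 < s < 1 ->
  measurable F -> F `\` Omega !=set0 ->
  admissible dist mu s Omega F !=set0 ->
  exists E : set X, is_minimizer dist mu s Omega F E.
Proof.
move=> hmet _ [C C1 hdbl] [hop _] [hOop _] _ _ mF [y _] [E0 [mE0 [hE0 hJ]]].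
have mO : measurable Omega := hop _ hOop.
have JP := fun E (mE : measurable E) => Js_Phi hmet hop C1 hdbl y s mO mE.
have hE0f := hJ; rewrite JP // in hE0f.
have [G [[mG hG] hGf hGmin]] := exists_min hmet hop C1 hdbl y mO
  (conj mE0 hE0) hE0f.
exists G; split => //; first by rewrite JP.
move=> E' mE' hE'; rewrite !JP //; exact: hGmin.
Qed.
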